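(* Let $z_1,z_2,z_3$ be three distinct complex numbers and let $w_1,w_2,w_3$ be three distinct complex numbers. Suppose that the 4-point sets $\{z_1,z_2,z_3,\infty\}$ and $\{w_1,w_2,w_3,\infty\}$ in the Riemann sphere $\widehat{\mathbb{C}}$ are Möbius equivalent, i.e. there is a Möbius transformation $\mu$ with $\mu(\{z_1,z_2,z_3,\infty\})=\{w_1,w_2,w_3,\infty\}$. Then there exists an affine transformation $T(z)=az+b$ with $a,b\in\mathbb{C}$, $a\neq 0$, such that $T(\{z_1,z_2,z_3\})=\{w_1,w_2,w_3\}$.
   Context: A Möbius transformation is a map $z\mapsto \frac{\alpha z+\beta}{\gamma z+\delta}$ of $\widehat{\mathbb{C}}=\mathbb{C}\cup\{\infty\}$ with $\alpha\delta-\beta\gamma\neq 0$. *)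

(* Defs.v *)
From HB Require Import structures.
From mathcomp Require Import all_boot all_order all_algebra.
From mathcomp Require Import complex.
From mathcomp Require Import reals.
Set Implicit Arguments. Unset Strict Implicit. Unset Printing Implicit Defensive.
Import Order.TTheory GRing.Theory Num.Theory.
Local Open Scope ring_scope.

(* The Riemann sphere: [Some z] is the finite point z, [None] is infinity. *)
Definition sphere (R : realType) := option R[i].

(* The Möbius transformation z |-> (a z + b)/(c z + d) acting on the sphere
   (the nondegeneracy condition a d - b c <> 0 is imposed separately). *)
Definition mobius (R : realType) (a b c d : R[i]) (p : sphere R) : sphere R :=
  match p with
  | Some z => if c * z + d == 0 then None else Some ((a * z + b) / (c * z + d))
  | None => if c == 0 then None else Some (a / c)
  end.

Definition pts_inf (R : realType) (z1 z2 z3 : R[i]) (p : sphere R) : Prop :=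
  p = Some z1 \/ p = Some z2 \/ p = Some z3 \/ p = None.

Definition pts3 (R : realType) (z1 z2 z3 : R[i]) (z : R[i]) : Prop :=
  z = z1 \/ z = z2 \/ z = z3.

(* Main.v *)
Require Import Defs.
From HB Require Import structures.
From mathcomp Require Import all_boot all_order all_algebra.
From mathcomp Require Import complex.
From mathcomp Require Import reals.
From mathcomp Require Import ring.
Import Order.TTheory GRing.Theory Num.Theory.
Local Open Scope ring_scope.

Lemma inf_some (R : realType) (w1 w2 w3 v : R[i]) :
  pts_inf w1 w2 w3 (Some v) <-> pts3 w1 w2 w3 v.
Proof.
rewrite /pts_inf /pts3; split.
  by move=> [[->]|[[->]|[[->]|//]]]; tauto.
by move=> [->|[->|->]]; tauto.
Qed.

Lemma sw12 (R : realType) (z1 z2 z3 : R[i]) p :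
  pts_inf z1 z2 z3 p <-> pts_inf z2 z1 z3 p.
Proof. rewrite /pts_inf; tauto. Qed.
Lemma sw13 (R : realType) (z1 z2 z3 : R[i]) p :
  pts_inf z1 z2 z3 p <-> pts_inf z3 z2 z1 p.
Proof. rewrite /pts_inf; tauto. Qed.
Lemma sw12' (R : realType) (z1 z2 z3 : R[i]) p :
  pts3 z1 z2 z3 p <-> pts3 z2 z1 z3 p.
Proof. rewrite /pts3; tauto. Qed.
Lemma sw13' (R : realType) (z1 z2 z3 : R[i]) p :
  pts3 z1 z2 z3 p <-> pts3 z3 z2 z1 p.
Proof. rewrite /pts3; tauto. Qed.

Lemma ex_tr (T : Type) (P P' X : T -> Prop) :
  (forall p, P p <-> P' p) ->
  (exists p, P p /\ X p) <-> (exists p, P' p /\ X p).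
Proof.
move=> h; split; move=> [p [hp hx]]; exists p; split => //; exact/h.
Qed.

Lemma core (R : realType) (z1 z2 z3 w1 w2 w3 al be ga de : R[i]) :
  z1 != z2 -> z1 != z3 -> z2 != z3 ->
  al * de - be * ga != 0 -> ga != 0 -> ga * z1 + de = 0 ->
  (forall q : sphere R,
        (exists p, pts_inf z1 z2 z3 p /\ mobius al be ga de p = q)
        <-> pts_inf w1 w2 w3 q) ->
  exists a b : R[i], a != 0 /\
    forall w : R[i],
      (exists z, pts3 z1 z2 z3 z /\ a * z + b = w) <-> pts3 w1 w2 w3 w.
Proof.
move=> n12 n13 n23 hdet hga hde H.
have de_eq : de = - ga * z1 by apply/eqP; rewrite -subr_eq0 -hde; apply/eqP; ring.
subst de.
have h21 : z2 - z1 != 0 by rewrite subr_eq0 eq_sym.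
have h31 : z3 - z1 != 0 by rewrite subr_eq0 eq_sym.
have hK : be * ga + al * ga * z1 != 0.
  by move: hdet; apply: contra => /eqP E; apply/eqP; rewrite -[RHS]oppr0 -E; ring.
set K := (be * ga + al * ga * z1) / ga ^+ 2.
set a := K / ((z2 - z1) * (z3 - z1)).
set w0 := al / ga.
set g2 := (al * z2 + be) / (ga * z2 + - ga * z1).
set g3 := (al * z3 + be) / (ga * z3 + - ga * z1).
have e2 : ga * z2 + - ga * z1 != 0.
  have -> : ga * z2 + - ga * z1 = ga * (z2 - z1) by ring.
  by rewrite mulf_neq0.
have e3 : ga * z3 + - ga * z1 != 0.
  have -> : ga * z3 + - ga * z1 = ga * (z3 - z1) by ring.
  by rewrite mulf_neq0.
have e1 : ga * z1 + - ga * z1 == 0 by apply/eqP; ring.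
exists a, (w0 - a * z1); split.
  by rewrite /a /K !mulf_neq0 ?invr_neq0 ?expf_neq0 ?mulf_neq0.
have T1 : a * z1 + (w0 - a * z1) = w0 by ring.
have T2 : a * z2 + (w0 - a * z1) = g3.
  rewrite /a /K /w0 /g3; field.
  by rewrite ?mulf_neq0 ?expf_neq0 ?h21 ?h31 ?hga ?e3.
have T3 : a * z3 + (w0 - a * z1) = g2.
  rewrite /a /K /w0 /g2; field.
  by rewrite ?mulf_neq0 ?expf_neq0 ?h21 ?h31 ?hga ?e2.
move=> w.
have L : (exists z, pts3 z1 z2 z3 z /\ a * z + (w0 - a * z1) = w) <->
         (w = w0 \/ w = g2 \/ w = g3).
  split.
    by move=> [z [[->|[->|->]] <-]]; rewrite ?T1 ?T2 ?T3; tauto.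
  move=> [->|[->|->]].
  - by exists z1; split; [left|].
  - by exists z3; split; [right; right|].
  - by exists z2; split; [right; left|].
rewrite L.
have M : (exists p, pts_inf z1 z2 z3 p /\ mobius al be ga (- ga * z1) p = Some w) <->
   (w = w0 \/ w = g2 \/ w = g3).
  split.
    move=> [p [[->|[->|[->|->]]] /= E]].
    - by move: E; rewrite e1.
    - by move: E; rewrite (negbTE e2) => -[<-]; tauto.
    - by move: E; rewrite (negbTE e3) => -[<-]; tauto.
    - by move: E; rewrite (negbTE hga) => -[<-]; tauto.
  move=> [->|[->|->]].
  - by exists None; split; [right; right; right| rewrite /= (negbTE hga)].
  - by exists (Some z2); split; [right; left| rewrite /= (negbTE e2)].
  - by exists (Some z3); split; [right; right; left| rewrite /= (negbTE e3)].
rewrite -M H /pts_inf /pts3.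
split.
  by move=> [[->]|[[->]|[[->]|//]]]; tauto.
by move=> [->|[->|->]]; tauto.
Qed.

Theorem lemma1p2 (R : realType) (z1 z2 z3 w1 w2 w3 : R[i]) :
  z1 != z2 -> z1 != z3 -> z2 != z3 ->
  w1 != w2 -> w1 != w3 -> w2 != w3 ->
  (exists alpha beta gamma delta : R[i],
      alpha * delta - beta * gamma != 0 /\
      forall q : sphere R,
        (exists p, pts_inf z1 z2 z3 p /\ mobius alpha beta gamma delta p = q)
        <-> pts_inf w1 w2 w3 q) ->
  exists a b : R[i], a != 0 /\
    forall w : R[i],
      (exists z, pts3 z1 z2 z3 z /\ a * z + b = w) <-> pts3 w1 w2 w3 w.
Proof.
move=> n12 n13 n23 _ _ _ [al [be [ga [de [hdet H]]]]].
case: (eqVneq ga 0) => [g0|gn].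
  subst ga.
  have hd : al * de != 0 by move: hdet; rewrite mulr0 subr0.
  have dn : de != 0 by move: hd; apply: contra => /eqP ->; rewrite mulr0.
  have an : al != 0 by move: hd; apply: contra => /eqP ->; rewrite mul0r.
  have mS : forall z, mobius al be 0 de (Some z) = Some (al / de * z + be / de).
    move=> z /=; rewrite mul0r add0r (negbTE dn); congr Some.
    by rewrite mulrDl mulrAC.
  exists (al / de), (be / de); split; first by rewrite mulf_neq0 ?invr_neq0.
  move=> w; split.
    move=> [z [hz <-]]; apply/inf_some; apply/H.
    exists (Some z); split; last exact: mS.
    by move: hz; rewrite /pts3 /pts_inf => -[->|[->|->]]; tauto.
  move=> /inf_some /H [[z|] [hz E]]; last by move: E => /=; rewrite eqxx.
  exists z; split; last by move: E; rewrite mS => -[].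
  by move: hz; rewrite /pts3 /pts_inf => -[[->]|[[->]|[[->]|//]]]; tauto.
have n21 : z2 != z1 by rewrite eq_sym.
have n31 : z3 != z1 by rewrite eq_sym.
have n32 : z3 != z2 by rewrite eq_sym.
have [p [hp hf]] := proj2 (H None) (or_intror (or_intror (or_intror erefl))).
case: hp => [E|[E|[E|E]]]; subst p; move: hf => /=; last by rewrite (negbTE gn).
- case: ifP => // /eqP E _.
  exact: (@core R z1 z2 z3 w1 w2 w3 al be ga de n12 n13 n23 hdet gn E H).
- case: ifP => // /eqP E _.
  have H' : forall q, (exists p, pts_inf z2 z1 z3 p /\ mobius al be ga de p = q)
      <-> pts_inf w1 w2 w3 q.
    by move=> q; rewrite -H; apply: ex_tr => p; rewrite sw12.
  have [a [b [ha hab]]] := @core R z2 z1 z3 w1 w2 w3 al be ga de n21 n23 n13 hdet gn E H'.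
  exists a, b; split => // w; rewrite -hab; apply: ex_tr => z; exact: sw12'.
- case: ifP => // /eqP E _.
  have H' : forall q, (exists p, pts_inf z3 z2 z1 p /\ mobius al be ga de p = q)
      <-> pts_inf w1 w2 w3 q.
    by move=> q; rewrite -H; apply: ex_tr => p; rewrite sw13.
  have [a [b [ha hab]]] := @core R z3 z2 z1 w1 w2 w3 al be ga de n32 n31 n21 hdet gn E H'.
  exists a, b; split => // w; rewrite -hab; apply: ex_tr => z; exact: sw13'.
Qed.
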